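(* Let $SI$, $UI$, $CI$ be a nonnegative bivariate information decomposition, let $\overline{SI}(S;X_1,X_2):=\sup_{f} SI(f(S);X_1,X_2)$ (supremum over all functions $f$ from the alphabet of $S$ to an arbitrary finite set), and let $\overline{UI}^*(S;X_1\setminus X_2):=I(S;X_1)-\overline{SI}(S;X_1,X_2)$. Suppose that $\overline{UI}^*(S;X_1\setminus X_2)=0$, and let $f^*$ be a function achieving the supremum defining $\overline{SI}(S;X_1,X_2)$. Then $X_1 - f^*(S) - S$ is a Markov chain (i.e. $X_1$ and $S$ are conditionally independent given $f^*(S)$), and $UI(f^*(S);X_1\setminus X_2)=0$.
   Context: All random variables have finite alphabets. A nonnegative bivariate information decomposition consists of nonnegative functions $SI(S;X_1,X_2)$, $UI(S;X_1\setminus X_2)$, $UI(S;X_2\setminus X_1)$, $CI(S;X_1,X_2)$, defined for every joint distribution of $(S,X_1,X_2)$ with arbitrary finite alphabets and depending continuously on it, such that $I(S;X_1X_2)=SI(S;X_1,X_2)+CI(S;X_1,X_2)+UI(S;X_1\setminus X_2)+UI(S;X_2\setminus X_1)$, $I(S;X_1)=SI(S;X_1,X_2)+UI(S;X_1\setminus X_2)$ and $I(S;X_2)=SI(S;X_1,X_2)+UI(S;X_2\setminus X_1)$, where $I$ denotes mutual information. *)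

(* Defs.v *)
From HB Require Import structures.
From mathcomp Require Import all_boot all_order all_algebra.
From mathcomp Require Import boolp classical_sets reals exp.
Set Implicit Arguments. Unset Strict Implicit. Unset Printing Implicit Defensive.
Import Order.TTheory GRing.Theory Num.Theory.
Local Open Scope ring_scope.

Section Defs.
Variable R : realType.

Definition is_dist (T : finType) (p : {ffun T -> R}) : Prop :=
  (forall t, 0 <= p t) /\ \sum_t p t = 1.

Definition margL (T U : finType) (q : {ffun T * U -> R}) (x : T) : R :=
  \sum_(u : U) q (x, u).
Definition margR (T U : finType) (q : {ffun T * U -> R}) (y : U) : R :=
  \sum_(t : T) q (t, y).
Definition MI (T U : finType) (q : {ffun T * U -> R}) : R :=
  \sum_(t : T * U)
     (if q t == 0 then 0 else q t * ln (q t / (margL q t.1 * margR q t.2))).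

(* From a joint distribution p of (S, X1, X2) on A * B1 * B2: *)
Definition joint_S_X1 (A B1 B2 : finType) (p : {ffun A * B1 * B2 -> R})
  : {ffun A * B1 -> R} := [ffun t => \sum_(x2 : B2) p (t.1, t.2, x2)].
Definition joint_S_X2 (A B1 B2 : finType) (p : {ffun A * B1 * B2 -> R})
  : {ffun A * B2 -> R} := [ffun t => \sum_(x1 : B1) p (t.1, x1, t.2)].
Definition joint_S_X12 (A B1 B2 : finType) (p : {ffun A * B1 * B2 -> R})
  : {ffun A * (B1 * B2) -> R} := [ffun t => p (t.1, t.2.1, t.2.2)].

Definition cont_on_dists (T : finType) (F : {ffun T -> R} -> R) : Prop :=
  forall p, is_dist p -> forall e : R, 0 < e ->
    exists2 d : R, 0 < d & forall q, is_dist q ->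
      (forall t, `|p t - q t| < d) -> `|F p - F q| < e.

Definition push (A B1 B2 C : finType) (f : A -> C) (p : {ffun A * B1 * B2 -> R})
  : {ffun C * B1 * B2 -> R} :=
  [ffun t => \sum_(a : A | f a == t.1.1) p (a, t.1.2, t.2)].

Definition cond_indep (T1 T2 T3 : finType) (q : {ffun T1 * T2 * T3 -> R}) : Prop :=
  forall x y z,
    q (x, y, z) * (\sum_(x' : T1) \sum_(y' : T2) q (x', y', z))
    = (\sum_(y' : T2) q (x, y', z)) * (\sum_(x' : T1) q (x', y, z)).

Definition joint_X1_S_fS (A B1 B2 C : finType) (f : A -> C)
  (p : {ffun A * B1 * B2 -> R}) : {ffun B1 * A * C -> R} :=
  [ffun t => if f t.1.2 == t.2 then \sum_(x2 : B2) p (t.1.2, t.1.1, x2) else 0].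

Definition markov_X1_fS_S (A B1 B2 C : finType) (f : A -> C)
  (p : {ffun A * B1 * B2 -> R}) : Prop :=
  cond_indep (joint_X1_S_fS f p).

Record nonneg_PID := NonnegPID {
  SI : forall A B1 B2 : finType, {ffun A * B1 * B2 -> R} -> R;
  UI1 : forall A B1 B2 : finType, {ffun A * B1 * B2 -> R} -> R;
  UI2 : forall A B1 B2 : finType, {ffun A * B1 * B2 -> R} -> R;
  CI : forall A B1 B2 : finType, {ffun A * B1 * B2 -> R} -> R;
  SI_ge0 : forall (A B1 B2 : finType) (p : {ffun A * B1 * B2 -> R}), is_dist p -> 0 <= @SI A B1 B2 p;
  UI1_ge0 : forall (A B1 B2 : finType) (p : {ffun A * B1 * B2 -> R}), is_dist p -> 0 <= @UI1 A B1 B2 p;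
  UI2_ge0 : forall (A B1 B2 : finType) (p : {ffun A * B1 * B2 -> R}), is_dist p -> 0 <= @UI2 A B1 B2 p;
  CI_ge0 : forall (A B1 B2 : finType) (p : {ffun A * B1 * B2 -> R}), is_dist p -> 0 <= @CI A B1 B2 p;
  SI_cont : forall A B1 B2, cont_on_dists (@SI A B1 B2);
  UI1_cont : forall A B1 B2, cont_on_dists (@UI1 A B1 B2);
  UI2_cont : forall A B1 B2, cont_on_dists (@UI2 A B1 B2);
  CI_cont : forall A B1 B2, cont_on_dists (@CI A B1 B2);
  PID_full : forall (A B1 B2 : finType) (p : {ffun A * B1 * B2 -> R}), is_dist p ->
    MI (joint_S_X12 p) = @SI A B1 B2 p + @CI A B1 B2 p + @UI1 A B1 B2 p + @UI2 A B1 B2 p;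
  PID_X1 : forall (A B1 B2 : finType) (p : {ffun A * B1 * B2 -> R}), is_dist p ->
    MI (joint_S_X1 p) = @SI A B1 B2 p + @UI1 A B1 B2 p;
  PID_X2 : forall (A B1 B2 : finType) (p : {ffun A * B1 * B2 -> R}), is_dist p ->
    MI (joint_S_X2 p) = @SI A B1 B2 p + @UI2 A B1 B2 p
}.

Definition SIbar (d : nonneg_PID) (A B1 B2 : finType) (p : {ffun A * B1 * B2 -> R}) : R :=
  sup [set r : R | exists (C : finType) (f : A -> C), r = SI d (push f p)].

Definition UIbar_star (d : nonneg_PID) (A B1 B2 : finType) (p : {ffun A * B1 * B2 -> R}) : R :=
  MI (joint_S_X1 p) - SIbar d p.

End Defs.

Arguments SI {R} _ {A B1 B2} _.
Arguments UI1 {R} _ {A B1 B2} _.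
Arguments UI2 {R} _ {A B1 B2} _.
Arguments CI {R} _ {A B1 B2} _.

(* Main.v *)
Require Import Defs.
From HB Require Import structures.
From mathcomp Require Import all_boot all_order all_algebra.
From mathcomp Require Import boolp classical_sets reals sequences exp.
From mathcomp Require Import ring lra.
Set Implicit Arguments. Unset Strict Implicit. Unset Printing Implicit Defensive.
Import Order.TTheory GRing.Theory Num.Theory.
Local Open Scope ring_scope.

Lemma ln_le_sub1 (R : realType) (y : R) : 0 < y ->
  ln y <= y - 1 /\ (ln y = y - 1 -> y = 1).
Proof.
move=> y0; have ey : expR (ln y) = y by rewrite lnK // qualifE.
split.
  by have := expR_ge1Dx (ln y); rewrite ey lerBrDl.
move=> H; apply/eqP; rewrite -ln_eq0 //; apply/negPn/negP => /expR_gt1Dx.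
by rewrite ey H addrC subrK ltxx.
Qed.

Section DPI.
Variables (R : realType) (A B C : finType) (f : A -> C) (q : {ffun A * B -> R}).
Hypothesis q0 : forall t, 0 <= q t.
Hypothesis q1 : \sum_t q t = 1.

Definition qC : {ffun C * B -> R} := [ffun t => \sum_(a | f a == t.1) q (a, t.2)].

Lemma qC0 t : 0 <= qC t.
Proof. by rewrite ffunE; apply: sumr_ge0. Qed.

Lemma PS0 a : 0 <= margL q a.
Proof. by apply: sumr_ge0. Qed.

Lemma PC0 c : 0 <= margL qC c.
Proof. by apply: sumr_ge0 => *; exact: qC0. Qed.

Lemma PX0 x : 0 <= margR q x.
Proof. by apply: sumr_ge0. Qed.

Lemma PCE c : margL qC c = \sum_(a | f a == c) margL q a.
Proof.
rewrite /margL; under eq_bigr do rewrite ffunE /=.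
by rewrite exchange_big.
Qed.

Lemma PXE x : margR qC x = margR q x.
Proof.
rewrite /margR [RHS](partition_big f predT) //=.
by apply: eq_bigr => c _; rewrite ffunE.
Qed.

Lemma q_le_qC a x : q (a, x) <= qC (f a, x).
Proof.
rewrite ffunE (bigD1 a) //= lerDl; apply: sumr_ge0 => *; exact: q0.
Qed.

Lemma q_le_PS a x : q (a, x) <= margL q a.
Proof.
rewrite /margL (bigD1 x) //= lerDl; apply: sumr_ge0 => *; exact: q0.
Qed.

Lemma q_le_PX a x : q (a, x) <= margR q x.
Proof.
rewrite /margR (bigD1 a) //= lerDl; apply: sumr_ge0 => *; exact: q0.
Qed.

Lemma PS_le_PC a : margL q a <= margL qC (f a).
Proof.
rewrite PCE (bigD1 a) //= lerDl; apply: sumr_ge0 => *; exact: PS0.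
Qed.

Lemma MI_alt (T U : finType) (r : {ffun T * U -> R}) :
  MI r = \sum_t r t * ln (r t / (margL r t.1 * margR r t.2)).
Proof. by apply: eq_bigr => t _; case: eqP => [->|]; rewrite ?mul0r. Qed.


Lemma sum_pair (T U : finType) (G : T * U -> R) :
  \sum_t G t = \sum_a \sum_x G (a, x).
Proof. by rewrite pair_big; apply: eq_big => [[]|[]]. Qed.

Lemma MIqC : MI qC =
  \sum_t q t * ln (qC (f t.1, t.2) / (margL qC (f t.1) * margR q t.2)).
Proof.
rewrite MI_alt !sum_pair /=.
under eq_bigr => c _ do under eq_bigr => x _ do rewrite PXE {1}ffunE /= mulr_suml.
under eq_bigr => c _ do rewrite exchange_big /=.
rewrite [RHS](partition_big f predT) //=.
apply: eq_bigr => c _; apply: eq_bigr => a /eqP <-; by [].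
Qed.

Definition g (t : A * B) := q t * (ln (q t / (margL q t.1 * margR q t.2))
   - ln (qC (f t.1, t.2) / (margL qC (f t.1) * margR q t.2))).
Definition h (t : A * B) :=
  q t - margL q t.1 * qC (f t.1, t.2) / margL qC (f t.1).

Lemma MI_diff : MI q - MI qC = \sum_t g t.
Proof.
rewrite MIqC MI_alt -sumrB; apply: eq_bigr => t _; by rewrite /g mulrBr.
Qed.

Lemma gh_pos a x : 0 < q (a, x) -> exists y, [/\ 0 < y,
  g (a, x) = q (a, x) * - ln y, h (a, x) = q (a, x) * (1 - y) &
  (y = 1 -> q (a, x) * margL qC (f a) = qC (f a, x) * margL q a)].
Proof.
move=> Qp.
have PSp : 0 < margL q a := lt_le_trans Qp (q_le_PS a x).
have PXp : 0 < margR q x := lt_le_trans Qp (q_le_PX a x).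
have Q'p : 0 < qC (f a, x) := lt_le_trans Qp (q_le_qC a x).
have PCp : 0 < margL qC (f a) := lt_le_trans PSp (PS_le_PC a).
set Q := q (a, x) in Qp *; set PS := margL q a in PSp *;
set PX := margR q x in PXp *; set Q' := qC (f a, x) in Q'p *;
set PC := margL qC (f a) in PCp *.
have pos u : 0 < u -> u \is Num.pos by rewrite qualifE.
exists (PS * Q' / (Q * PC)); split.
- by rewrite divr_gt0 // mulr_gt0.
- rewrite /g /= -/Q -/PS -/PX -/Q' -/PC.
  rewrite !ln_div ?pos ?mulr_gt0 ?divr_gt0 // !lnM ?pos //; ring.
- rewrite /h /= -/Q -/PS -/Q' -/PC; field.
  by apply/andP; split; rewrite gt_eqF.
- move=> y1; have QPC : Q * PC != 0 by rewrite gt_eqF // mulr_gt0.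
  move: y1 => /(congr1 (fun z => z * (Q * PC))); rewrite mul1r divfK // => <-.
  by rewrite mulrC.
Qed.

Lemma g_ge_h t : h t <= g t.
Proof.
case: t => a x.
have [Q0|Qp] := eqVneq (q (a, x)) 0.
  rewrite /g /h /= Q0 mul0r sub0r oppr_le0.
  by rewrite divr_ge0 ?PC0 // mulr_ge0 ?PS0 ?qC0.
have {Qp}Qp : 0 < q (a, x) by rewrite lt_def Qp q0.
have [y [yp -> -> _]] := gh_pos Qp.
rewrite ler_wpM2l ?q0 //; have [H _] := ln_le_sub1 yp; lra.
Qed.

Lemma sum_h : \sum_t h t = 0.
Proof.
rewrite /h sumrB q1 sum_pair /=.
under eq_bigr => a _ do under eq_bigr => x _ do rewrite mulrAC.
under eq_bigr => a _ do rewrite -mulr_sumr.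
apply/eqP; rewrite subr_eq0 -{1}q1 sum_pair; apply/eqP.
apply: eq_bigr => a _; rewrite -/(margL qC (f a)) -/(margL q a).
have [PC0'|PCn] := eqVneq (margL qC (f a)) 0.
  have : margL q a = 0 by apply/le_anti; rewrite PS0 -PC0' PS_le_PC.
  by move=> ->; rewrite !mul0r.
by rewrite divfK.
Qed.

Lemma dpi : MI qC <= MI q.
Proof.
rewrite -subr_ge0 MI_diff -{1}sum_h; apply: ler_sum => t _; exact: g_ge_h.
Qed.

Lemma dpi_eq : MI qC = MI q ->
  forall a x, q (a, x) * margL qC (f a) = qC (f a, x) * margL q a.
Proof.
move=> E.
have S0 : \sum_t (g t - h t) = 0 by rewrite sumrB -MI_diff sum_h E !subrr.
have H : forall t, g t - h t = 0.
  move=> t; apply: (psumr_eq0P _ S0) => // i _; by rewrite subr_ge0 g_ge_h.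
move=> a x; have /eqP := H (a, x).
rewrite subr_eq0 => /eqP ghE.
have [Q0|Qp] := eqVneq (q (a, x)) 0.
  move: ghE; rewrite /g /h /= Q0 !mul0r sub0r => /esym/eqP; rewrite oppr_eq0.
  rewrite mulf_eq0 invr_eq0 mulf_eq0 => /orP[/orP[]|] /eqP P0; rewrite ?P0 ?mulr0 ?mul0r //.
  have : margL q a = 0 by apply/le_anti; rewrite PS0 -P0 PS_le_PC.
  by move=> ->; rewrite mulr0.
have {Qp}Qp : 0 < q (a, x) by rewrite lt_def Qp q0.
have [y [yp ge he]] := gh_pos Qp; apply.
move: ghE; rewrite ge he => /(mulfI (lt0r_neq0 Qp)) E2.
by have [_ ] := ln_le_sub1 yp; apply; lra.
Qed.

End DPI.

Lemma push_sum (R : realType) (A B1 B2 C : finType) (f : A -> C)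
  (p : {ffun A * B1 * B2 -> R}) : \sum_t push f p t = \sum_t p t.
Proof.
rewrite !sum_pair /=.
under eq_bigr => c _ do under eq_bigr => x1 _ do under eq_bigr => x2 _ do rewrite ffunE /=.
under eq_bigr => c _ do (rewrite exchange_big /=; under eq_bigr => x2 _ do rewrite exchange_big /=).
under eq_bigr => c _ do rewrite exchange_big /=.
rewrite [RHS](partition_big f predT) //=.
apply: eq_bigr => c _; apply: eq_bigr => a _; exact: exchange_big.
Qed.

Lemma push_dist (R : realType) (A B1 B2 C : finType) (f : A -> C)
  (p : {ffun A * B1 * B2 -> R}) : is_dist p -> is_dist (push f p).
Proof.
move=> [p0 p1]; split; last by rewrite push_sum.
by move=> t; rewrite ffunE; apply: sumr_ge0.
Qed.

Lemma joint_push (R : realType) (A B1 B2 C : finType) (f : A -> C)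
  (p : {ffun A * B1 * B2 -> R}) :
  joint_S_X1 (push f p) = qC f (joint_S_X1 p).
Proof.
apply/ffunP => -[c x1]; rewrite !ffunE /=.
under eq_bigr do rewrite ffunE /=.
rewrite exchange_big; apply: eq_bigr => a _; by rewrite ffunE.
Qed.

Theorem lemma4 (R : realType) (d : nonneg_PID R) (A B1 B2 : finType)
  (p : {ffun A * B1 * B2 -> R}) (C : finType) (fstar : A -> C) :
  is_dist p ->
  UIbar_star d p = 0 ->
  SI d (push fstar p) = SIbar d p ->
  markov_X1_fS_S fstar p /\ UI1 d (push fstar p) = 0.
Proof.
move=> hp hU hSI.
set q := joint_S_X1 p.
have q0 : forall t, 0 <= q t.
  by move=> t; rewrite ffunE; apply: sumr_ge0 => *; apply: (proj1 hp).
have q1 : \sum_t q t = 1.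
  rewrite -(proj2 hp) [RHS]sum_pair; apply: eq_bigr => -[a x1] _; by rewrite /q ffunE.
have E1 : MI q = SIbar d p.
  by move: hU; rewrite /UIbar_star => /eqP; rewrite subr_eq0 => /eqP.
have hpush := push_dist fstar hp.
have X := @PID_X1 R d _ _ _ _ hpush.
rewrite joint_push -/q hSI -E1 in X.
have U0 := @UI1_ge0 R d _ _ _ _ hpush.
have D := dpi fstar q0.
have UI0 : UI1 d (push fstar p) = 0 by lra.
split => //.
have Eq : MI (qC fstar q) = MI q by lra.
have K := dpi_eq q0 q1 Eq.
move=> x y z.
have J : forall x s c, joint_X1_S_fS fstar p (x, s, c) =
    if fstar s == c then q (s, x) else 0 by move=> *; rewrite /q !ffunE.
rewrite J.
under eq_bigr do under eq_bigr do rewrite J.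
under [X in _ = X * _]eq_bigr do rewrite J.
under [X in _ = _ * X]eq_bigr do rewrite J.
have S1 : \sum_x' \sum_y' (if fstar y' == z then q (y', x') else 0)
    = margL (qC fstar q) z.
  by rewrite /margL; apply: eq_bigr => x' _; rewrite ffunE /= [RHS]big_mkcond.
have S2 : \sum_y' (if fstar y' == z then q (y', x) else 0) = qC fstar q (z, x).
  by rewrite ffunE /= [RHS]big_mkcond.
rewrite S1 S2.
case: (eqVneq (fstar y) z) => [<-|ne].
  exact: K.
rewrite big1 ?mulr0 ?mul0r // => x' _; by rewrite (negbTE ne).
Qed.
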